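(* Let $a<b$, $\lambda>0$, let $H(y):=\tfrac12\left(\tfrac12 y^2-\lambda\right)^2$ for $y\in\mathbb{R}$, let $\theta\in C[a,b]$ with $\min_{[a,b]}\theta>0$, and let $F\in C^1[a,b]$ with $F(a)=F(b)=0$, $F(x)\neq0$ for $x\in(a,b)$ and $\|F\|_\infty<(2\lambda/3)^{3/2}$. Let $X:=C_0[a,b]:=\{v\in C[a,b]\mid v(a)=v(b)=0\}$ and $K:X\to\mathbb{R}$, $K(v):=\int_a^b\theta\cdot(H\circ v-Fv)$. Then $K$ has exactly one stationary point $\overline v$. More precisely, for each $x\in[a,b]$, $\overline v(x)$ is the unique solution in the interval $\left(-\sqrt{2\lambda/3},\sqrt{2\lambda/3}\right)$ of the equation $z\left(\tfrac12 z^2-\lambda\right)=F(x)$.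
   Context: A point $v\in X$ is called a stationary point of $K$ if its Gâteaux derivative vanishes, i.e. $T_v(h):=\int_a^b\theta\left[v\left(\tfrac12 v^2-\lambda\right)-F\right]h=0$ for all $h\in X$ (this Gâteaux derivative is the same for each of the norms $\|\cdot\|_p$, $p\in[1,\infty]$, on $X$). *)

(* Defs.v *)
From Stdlib Require Import Reals.
From Coquelicot Require Import Coquelicot.
Open Scope R_scope.

Definition cont_on (a b : R) (f : R -> R) : Prop :=
  forall x, a <= x <= b ->
    filterlim f (within (fun y => a <= y <= b) (locally x)) (locally (f x)).

Definition C1_on (a b : R) (f : R -> R) : Prop :=
  exists f' : R -> R,
    cont_on a b f' /\
    forall x, a <= x <= b ->
      filterlim (fun y => (f y - f x) / (y - x))
        (within (fun y => a <= y <= b /\ y <> x) (locally x))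
        (locally (f' x)).

Definition in_C0 (a b : R) (v : R -> R) : Prop :=
  cont_on a b v /\ v a = 0 /\ v b = 0.

Definition sup_norm (a b : R) (f : R -> R) : Rbar :=
  Lub_Rbar (fun y => exists x, a <= x <= b /\ y = Rabs (f x)).

Definition H (lam y : R) : R := / 2 * (/ 2 * y ^ 2 - lam) ^ 2.

Definition K (a b lam : R) (theta F v : R -> R) : R :=
  RInt (fun x => theta x * (H lam (v x) - F x * v x)) a b.

(* Gateaux derivative T_v(h) of K at v in direction h. *)
Definition T (a b lam : R) (theta F v h : R -> R) : R :=
  RInt (fun x => theta x * (v x * (/ 2 * (v x) ^ 2 - lam) - F x) * h x) a b.

Definition stationary (a b lam : R) (theta F v : R -> R) : Prop :=
  in_C0 a b v /\ forall h, in_C0 a b h -> T a b lam theta F v h = 0.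

(* Main.v *)
Require Import Defs.
From Stdlib Require Import Reals.
From Coquelicot Require Import Coquelicot.
From Stdlib Require Import Lra Psatz ClassicalEpsilon.
Open Scope R_scope.
Lemma ball_R x e y : ball x e y <-> Rabs (y - x) < e.
Proof. reflexivity. Qed.
Ltac ballR H := let H' := fresh in pose proof (proj1 (ball_R _ _ _) H) as H'; clear H; rename H' into H.

Lemma cmul f g x : continuity_pt f x -> continuity_pt g x -> continuity_pt (fun y => f y * g y) x.
Proof. exact (continuity_pt_mult f g x). Qed.
Lemma cminus f g x : continuity_pt f x -> continuity_pt g x -> continuity_pt (fun y => f y - g y) x.
Proof. exact (continuity_pt_minus f g x). Qed.
Lemma cconst c x : continuity_pt (fun _ => c) x.
Proof. apply continuity_pt_const. intros u v; reflexivity. Qed.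
Lemma cid x : continuity_pt (fun y => y) x.
Proof. apply derivable_continuous_pt. apply derivable_pt_id. Qed.

Definition clamp (a b x : R) := Rmax a (Rmin b x).

Lemma clamp_in a b x : a <= b -> a <= clamp a b x <= b.
Proof. intros; unfold clamp, Rmax, Rmin; repeat destruct Rle_dec; lra. Qed.
Lemma clamp_id a b x : a <= x <= b -> clamp a b x = x.
Proof. intros; unfold clamp, Rmax, Rmin; repeat destruct Rle_dec; lra. Qed.
Lemma clamp_lip a b x y : a <= b -> Rabs (clamp a b y - clamp a b x) <= Rabs (y - x).
Proof. intros; unfold clamp, Rmax, Rmin; repeat destruct Rle_dec;
  unfold Rabs; repeat destruct Rcase_abs; lra. Qed.

Lemma L1 a b f : a <= b -> cont_on a b f -> forall x, continuity_pt (fun y => f (clamp a b y)) x.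
Proof.
  intros hab hf x. apply continuity_pt_filterlim. apply filterlim_locally. intro eps.
  pose proof (clamp_in a b x hab) as Hc.
  pose proof (proj1 (filterlim_locally _ _) (hf _ Hc) eps) as H.
  unfold within in H. destruct H as [del Hdel].
  exists del. intros y Hy. apply Hdel.
  - apply ball_R. ballR Hy. pose proof (clamp_lip a b x y hab). lra.
  - apply clamp_in; auto.
Qed.

Lemma L2 a b f g : (forall x, a <= x <= b -> continuity_pt g x) ->
  (forall x, a <= x <= b -> g x = f x) -> cont_on a b f.
Proof.
  intros hg hgf x Hx. apply filterlim_locally. intro eps.
  pose proof (proj1 (continuity_pt_filterlim _ _) (hg x Hx)) as H.
  pose proof (proj1 (filterlim_locally _ _) H eps) as [del Hdel].
  exists del. intros y Hy Dy. rewrite <- (hgf x Hx), <- (hgf y Dy). apply Hdel; auto.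
Qed.

Lemma C1_cont a b F : C1_on a b F -> cont_on a b F.
Proof.
  intros [F' [_ hd]] x Hx. apply filterlim_locally. intro eps.
  pose proof (proj1 (filterlim_locally _ _) (hd x Hx) (mkposreal 1 Rlt_0_1)) as H1.
  unfold within in H1. destruct H1 as [d1 H1].
  assert (Hr : 0 < eps / (Rabs (F' x) + 1)).
  { apply Rdiv_lt_0_compat. apply cond_pos. pose proof (Rabs_pos (F' x)); lra. }
  exists (mkposreal _ (Rmin_pos _ _ (cond_pos d1) Hr)). intros y Hy Dy.
  ballR Hy; simpl in Hy. apply ball_R.
  destruct (Req_dec y x) as [->|Hne].
  { replace (F x - F x) with 0 by ring. rewrite Rabs_R0. apply cond_pos. }
  assert (Hb : ball x d1 y).
  { apply ball_R. pose proof (Rmin_l d1 (eps / (Rabs (F' x) + 1))). lra. }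
  specialize (H1 y Hb (conj Dy Hne)). ballR H1. simpl in H1.
  set (q := (F y - F x) / (y - x)) in *.
  assert (Hq : F y - F x = q * (y - x)). { unfold q. field. lra. }
  rewrite Hq, Rabs_mult.
  assert (Hqb : Rabs q <= Rabs (F' x) + 1).
  { pose proof (Rabs_triang_inv q (F' x)). lra. }
  assert (Hyx : Rabs (y - x) < eps / (Rabs (F' x) + 1)).
  { pose proof (Rmin_r d1 (eps / (Rabs (F' x) + 1))). lra. }
  assert (Hpos : 0 < Rabs (F' x) + 1) by (pose proof (Rabs_pos (F' x)); lra).
  apply Rle_lt_trans with ((Rabs (F' x) + 1) * Rabs (y - x)).
  { apply Rmult_le_compat_r. apply Rabs_pos. exact Hqb. }
  replace (pos eps) with ((Rabs (F' x) + 1) * (eps / (Rabs (F' x) + 1))) by (field; lra).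
  apply Rmult_lt_compat_l; auto.
Qed.

Lemma int_zero a b (P : R -> R) : a < b -> (forall x, continuity_pt P x) ->
  (forall x, a < x < b -> 0 <= P x) -> RInt P a b = 0 ->
  forall x, a < x < b -> P x = 0.
Proof.
  intros hab hc hnn hI x0 Hx0.
  destruct (Req_dec (P x0) 0) as [E|Hne]; auto. exfalso.
  assert (Hp : 0 < P x0) by (pose proof (hnn x0 Hx0); lra).
  pose proof (proj1 (continuity_pt_filterlim _ _) (hc x0)) as H.
  assert (Hh : 0 < P x0 / 2) by lra.
  pose proof (proj1 (filterlim_locally _ _) H (mkposreal _ Hh)) as [del Hdel].
  set (e := Rmin (del/2) (Rmin ((x0 - a)/2) ((b - x0)/2))).
  assert (He : 0 < e).
  { unfold e. apply Rmin_pos. pose proof (cond_pos del); lra. apply Rmin_pos; lra. }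
  assert (He1 : e <= del/2) by apply Rmin_l.
  assert (He2 : e <= (x0 - a)/2) by (eapply Rle_trans; [apply Rmin_r|apply Rmin_l]).
  assert (He3 : e <= (b - x0)/2) by (eapply Rle_trans; [apply Rmin_r|apply Rmin_r]).
  assert (Hex : forall u v, ex_RInt P u v).
  { intros u v. apply (ex_RInt_continuous (V:=R_CompleteNormedModule)). intros z _. apply continuity_pt_filterlim. apply hc. }
  rewrite <- (RInt_Chasles P a (x0 - e) b (Hex _ _) (Hex _ _)) in hI.
  rewrite <- (RInt_Chasles P (x0 - e) (x0 + e) b (Hex _ _) (Hex _ _)) in hI.
  change (RInt P a (x0 - e) + (RInt P (x0 - e) (x0 + e) + RInt P (x0 + e) b) = 0) in hI.
  assert (I1 : 0 <= RInt P a (x0 - e)).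
  { apply RInt_ge_0. lra. apply Hex. intros; apply hnn; lra. }
  assert (I3 : 0 <= RInt P (x0 + e) b).
  { apply RInt_ge_0. lra. apply Hex. intros; apply hnn; lra. }
  assert (I2 : RInt (fun _ => P x0 / 2) (x0 - e) (x0 + e) <= RInt P (x0 - e) (x0 + e)).
  { apply RInt_le. lra. apply ex_RInt_const. apply Hex.
    intros y Hy. assert (Hb : ball x0 del y). { apply ball_R. unfold Rabs; destruct Rcase_abs; lra. }
    specialize (Hdel y Hb). ballR Hdel. simpl in Hdel.
    unfold Rabs in Hdel; destruct Rcase_abs in Hdel; lra. }
  rewrite RInt_const in I2. change (scal (x0 + e - (x0 - e)) (P x0 / 2)) with ((x0 + e - (x0 - e)) * (P x0 / 2)) in I2.
  nra.
Qed.

Definition p (lam z : R) := z * (/ 2 * z ^ 2 - lam).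

Lemma abs_le x t : Rabs x <= t <-> -t <= x <= t.
Proof. unfold Rabs; destruct Rcase_abs; split; intros; lra. Qed.
Lemma abs_lt x t : Rabs x < t <-> -t < x < t.
Proof. unfold Rabs; destruct Rcase_abs; split; intros; lra. Qed.

Lemma p_diff lam z1 z2 : p lam z1 - p lam z2 = (z1 - z2) * ((z1*z1 + z1*z2 + z2*z2)/2 - lam).
Proof. unfold p; field. Qed.

Lemma root_unique lam s z1 z2 : lam = 3/2*(s*s) -> 0 < s -> -s < z1 < s -> -s < z2 < s ->
  p lam z1 = p lam z2 -> z1 = z2.
Proof.
  intros hl hs h1 h2 he.
  assert (Hd := p_diff lam z1 z2). rewrite he, Rminus_diag in Hd.
  assert (K : (z1*z1 + z1*z2 + z2*z2)/2 - lam < 0).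
  { assert (0 < (s - z1)*(s+z1)) by (apply Rmult_lt_0_compat; lra).
    assert (0 < (s - z2)*(s+z2)) by (apply Rmult_lt_0_compat; lra).
    assert (z1*z1 < s*s) by nra. assert (z2*z2 < s*s) by nra.
    assert (z1*z2 <= (z1*z1+z2*z2)/2) by (pose proof (Rle_0_sqr (z1 - z2)); unfold Rsqr in *; lra). nra. }
  symmetry in Hd. apply Rmult_integral in Hd. destruct Hd; lra.
Qed.

Lemma p_plus lam s z : lam = 3/2*(s*s) -> p lam z + s^3 = (z - s)^2 * (z + 2*s) / 2.
Proof. intros ->; unfold p; field. Qed.
Lemma p_minus lam s z : lam = 3/2*(s*s) -> s^3 - p lam z = (z + s)^2 * (2*s - z) / 2.
Proof. intros ->; unfold p; field. Qed.

Lemma p_s lam s : lam = 3/2*(s*s) -> p lam s = - s^3.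
Proof. intros ->; unfold p; field. Qed.
Lemma p_ms lam s : lam = 3/2*(s*s) -> p lam (-s) = s^3.
Proof. intros ->; unfold p; field. Qed.

Lemma root_exists lam s c : lam = 3/2*(s*s) -> 0 < s -> Rabs c < s^3 ->
  exists z, -s < z < s /\ p lam z = c.
Proof.
  intros hl hs hc. apply abs_lt in hc.
  assert (Hc : continuity (fun z => c - p lam z)). { unfold p. reg. }
  assert (hs3 : 0 < s^3) by (apply pow_lt; lra).
  destruct (IVT (fun z => c - p lam z) (-s) s Hc ltac:(lra)) as [z [Hz Hz0]].
  { cbv beta. rewrite (p_ms lam s hl); lra. } { cbv beta. rewrite (p_s lam s hl); lra. }
  cbv beta in Hz0. exists z. split; [|lra].
  assert (z <> -s) by (intro E; rewrite E, (p_ms lam s hl) in Hz0; lra).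
  assert (z <> s) by (intro E; rewrite E, (p_s lam s hl) in Hz0; lra).
  lra.
Qed.

Lemma root_bound lam s N z : lam = 3/2*(s*s) -> 0 < s -> 0 <= N -> N < s^3 ->
  -s < z < s -> Rabs (p lam z) <= N -> Rabs z <= s - (s^3 - N)/(3*(s*s)).
Proof.
  intros hl hs hN hNs hz hp. apply abs_le in hp.
  set (d := (s^3 - N)/(3*(s*s))).
  assert (Hd : d * (3*(s*s)) = s^3 - N) by (unfold d; field; lra).
  assert (hss : 0 < s*s) by nra.
  assert (A : s - z >= d).
  { pose proof (p_plus lam s z hl).
    assert ((z - s)^2 * (z + 2*s) / 2 <= 3*(s*s)*(s - z)).
    { replace ((z - s)^2) with ((s-z)*(s-z)) by ring.
      assert (0 < s - z) by lra. assert ((s-z)*(z+2*s) <= 2*s*(3*s)) by nra. nra. }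
    destruct (Rlt_or_le (s - z) d); [|lra].
    assert ((d - (s - z)) * (3*(s*s)) > 0) by (apply Rmult_gt_0_compat; lra). nra. }
  assert (B : s + z >= d).
  { pose proof (p_minus lam s z hl).
    assert ((z + s)^2 * (2*s - z) / 2 <= 3*(s*s)*(s + z)).
    { replace ((z + s)^2) with ((s+z)*(s+z)) by ring.
      assert (0 < s + z) by lra. assert ((s+z)*(2*s - z) <= 2*s*(3*s)) by nra. nra. }
    destruct (Rlt_or_le (s + z) d); [|lra].
    assert ((d - (s + z)) * (3*(s*s)) > 0) by (apply Rmult_gt_0_compat; lra). nra. }
  apply abs_le. lra.
Qed.

Lemma p_lip lam t z1 z2 : 0 <= t -> Rabs z1 <= t -> Rabs z2 <= t ->
  (lam - 3/2*(t*t)) * Rabs (z1 - z2) <= Rabs (p lam z1 - p lam z2).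
Proof.
  intros ht h1 h2. rewrite p_diff, Rabs_mult. apply abs_le in h1. apply abs_le in h2.
  assert (0 <= (t - z1)*(t+z1)) by (apply Rmult_le_pos; lra).
  assert (0 <= (t - z2)*(t+z2)) by (apply Rmult_le_pos; lra).
  assert (z1*z2 <= (z1*z1+z2*z2)/2) by (pose proof (Rle_0_sqr (z1 - z2)); unfold Rsqr in *; lra).
  rewrite Rmult_comm. apply Rmult_le_compat_l. apply Rabs_pos.
  apply Rle_trans with (- ((z1 * z1 + z1 * z2 + z2 * z2) / 2 - lam)); [lra|].
  rewrite <- Rabs_Ropp. apply Rle_abs.
Qed.

Lemma cpow2 f x : continuity_pt f x -> continuity_pt (fun y => f y ^ 2) x.
Proof. intro H. exact (continuity_pt_comp f (fun u => u ^ 2) x H ltac:(reg)). Qed.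

Ltac reqR := match goal with |- @eq _ ?l ?r => change (@eq R l r) end.
Ltac ccont := repeat first [apply cconst | apply cid | apply cmul | apply cminus | apply cpow2
  | (apply L1; [lra|assumption])].

Theorem proposition2 (a b lam : R) (theta F : R -> R)
  (hab : a < b) (hlam : 0 < lam)
  (htheta_cont : cont_on a b theta)
  (htheta_pos : forall x, a <= x <= b -> 0 < theta x)
  (hF : C1_on a b F) (hFa : F a = 0) (hFb : F b = 0)
  (hFnz : forall x, a < x < b -> F x <> 0)
  (hFnorm : Rbar_lt (sup_norm a b F) (Finite (Rpower (2 * lam / 3) (3 / 2)))) :
  exists vbar : R -> R,
    stationary a b lam theta F vbar /\
    (forall w, stationary a b lam theta F w ->
       forall x, a <= x <= b -> w x = vbar x) /\
    (forall x, a <= x <= b ->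
       - sqrt (2 * lam / 3) < vbar x < sqrt (2 * lam / 3) /\
       vbar x * (/ 2 * (vbar x) ^ 2 - lam) = F x /\
       (forall z, - sqrt (2 * lam / 3) < z < sqrt (2 * lam / 3) ->
          z * (/ 2 * z ^ 2 - lam) = F x -> z = vbar x)).
Proof.
  set (s := sqrt (2 * lam / 3)).
  assert (Hs : 0 < s) by (apply sqrt_lt_R0; lra).
  assert (Hss : s * s = 2 * lam / 3) by (apply sqrt_sqrt; lra).
  assert (hl : lam = 3/2*(s*s)) by lra.
  assert (hs3 : 0 < s^3) by (apply pow_lt; lra).
  assert (HM : Rpower (2 * lam / 3) (3 / 2) = s^3).
  { replace (3/2) with (1 + /2) by field.
    rewrite Rpower_plus, Rpower_1, Rpower_sqrt by lra. fold s. rewrite <- Hss. ring. }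
  rewrite HM in hFnorm.
  assert (HN : exists N, 0 <= N /\ N < s^3 /\ forall x, a <= x <= b -> Rabs (F x) <= N).
  { unfold sup_norm in hFnorm.
    destruct (Lub_Rbar_correct (fun y => exists x, a <= x <= b /\ y = Rabs (F x))) as [Hub _].
    destruct (Lub_Rbar (fun y => exists x, a <= x <= b /\ y = Rabs (F x))) as [r| |];
      simpl in hFnorm.
    - assert (Hx : forall x, a <= x <= b -> Rabs (F x) <= r).
      { intros x Hx. exact (Hub (Rabs (F x)) (ex_intro _ x (conj Hx eq_refl))). }
      exists r. split; [|split; auto]. eapply Rle_trans; [apply Rabs_pos| apply (Hx a); lra].
    - contradiction.
    - exfalso. exact (Hub (Rabs (F a)) (ex_intro _ a (conj (conj (Rle_refl a) (Rlt_le _ _ hab)) eq_refl))). }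
  destruct HN as [N [HN0 [HNs HFN]]].
  assert (HFc : cont_on a b F) by (apply C1_cont; auto).
  set (d := (s^3 - N)/(3*(s*s))).
  assert (Hd : 0 < d) by (unfold d; apply Rdiv_lt_0_compat; nra).
  assert (Hd2 : d <= s/3).
  { unfold d. apply Rmult_le_reg_r with (3*(s*s)). nra. unfold Rdiv. field_simplify; nra. }
  set (t := s - d).
  assert (Ht0 : 0 <= t) by (unfold t; lra).
  set (kap := lam - 3/2*(t*t)).
  assert (Hk : 0 < kap).
  { unfold kap. assert (t*t < s*s). { unfold t. nra. } lra. }
  set (vbar := fun x => epsilon (inhabits 0) (fun z => -s < z < s /\ p lam z = F x)).
  assert (Hv : forall x, a <= x <= b -> -s < vbar x < s /\ p lam (vbar x) = F x).
  { intros x Hx. unfold vbar. apply epsilon_spec. apply root_exists; auto.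
    specialize (HFN x Hx). lra. }
  assert (Huniq : forall x z, a <= x <= b -> -s < z < s -> p lam z = F x -> z = vbar x).
  { intros x z Hx Hz E. destruct (Hv x Hx) as [h1 h2]. apply (root_unique lam s); auto. congruence. }
  assert (Hbd : forall x, a <= x <= b -> Rabs (vbar x) <= t).
  { intros x Hx. destruct (Hv x Hx) as [h1 h2]. apply (root_bound lam s N); auto.
    rewrite h2. auto. }
  assert (Hcv : cont_on a b vbar).
  { intros x Hx. apply filterlim_locally. intro eps.
    assert (He : 0 < kap * eps) by (apply Rmult_lt_0_compat; [lra| apply cond_pos]).
    pose proof (proj1 (filterlim_locally _ _) (HFc x Hx) (mkposreal _ He)) as H.
    unfold within in H |- *. destruct H as [del Hdel]. exists del. intros y Hy Dy.
    specialize (Hdel y Hy Dy). ballR Hdel. simpl in Hdel. apply ball_R.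
    pose proof (p_lip lam t (vbar y) (vbar x) Ht0 (Hbd y Dy) (Hbd x Hx)) as H.
    destruct (Hv x Hx) as [_ E1]; destruct (Hv y Dy) as [_ E2]. rewrite E1, E2 in H.
    fold kap in H. apply Rmult_lt_reg_l with kap; lra. }
  exists vbar. split; [|split].
  - split; [split; [exact Hcv| split]|].
    + symmetry; apply Huniq; [lra | lra | unfold p; rewrite hFa; ring].
    + symmetry; apply Huniq; [lra | lra | unfold p; rewrite hFb; ring].
    + intros h Hh. unfold T. rewrite (RInt_ext _ (fun _ => 0)).
      * rewrite RInt_const. change (scal (b - a) 0) with ((b - a) * 0). ring.
      * rewrite Rmin_left, Rmax_right by lra. intros x Hx.
        destruct (Hv x ltac:(lra)) as [_ E]. unfold p in E. rewrite E, Rminus_diag, Rmult_0_r, Rmult_0_l. reflexivity.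
  - intros w [[Hwc [Hwa Hwb]] Hw] x Hx.
    assert (Hpw : forall x, a <= x <= b -> p lam (w x) = F x).
    { set (phi := fun y => theta y * (w y * (/ 2 * (w y) ^ 2 - lam) - F y)).
      set (h := fun y => phi y * ((y - a) * (b - y))).
      assert (Hce : forall y, continuity_pt (fun z => phi (clamp a b z)) y).
      { intro y. unfold phi. ccont. }
      assert (Hin : in_C0 a b h).
      { split; [|split].
        - apply (L2 a b h (fun y => phi (clamp a b y) * ((y - a) * (b - y)))).
          + intros y _. apply cmul. apply Hce. ccont.
          + intros y Hy. unfold h. rewrite clamp_id by auto. reflexivity.
        - unfold h. ring.
        - unfold h. ring. }
      specialize (Hw h Hin). unfold T in Hw.
      rewrite (RInt_ext _ (fun y => (phi (clamp a b y))^2 * ((y - a) * (b - y)))) in Hw.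
      2:{ rewrite Rmin_left, Rmax_right by lra. intros y Hy.
          rewrite clamp_id by lra. unfold h, phi. reqR. ring. }
      set (Phi := fun y => (phi (clamp a b y))^2 * ((y - a) * (b - y))) in Hw.
      assert (C1 : forall y, continuity_pt Phi y).
      { intro y. unfold Phi. apply cmul; [apply cpow2; apply Hce | ccont]. }
      assert (C2 : forall y, a < y < b -> 0 <= Phi y).
      { intros y Hy. unfold Phi. apply Rmult_le_pos; [apply pow2_ge_0 | nra]. }
      assert (Z := int_zero a b Phi hab C1 C2 Hw). unfold Phi in Z.
      intros y Hy.
      destruct (Req_dec y a) as [->|Ha]. { rewrite Hwa, hFa. unfold p. ring. }
      destruct (Req_dec y b) as [->|Hb]. { rewrite Hwb, hFb. unfold p. ring. }
      specialize (Z y ltac:(lra)). cbv beta in Z. rewrite clamp_id in Z by lra.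
      apply Rmult_integral in Z. destruct Z as [Z|Z]; [|exfalso; nra].
      assert (Z2 : phi y = 0) by (simpl in Z; nra).
      unfold phi in Z2. pose proof (htheta_pos y Hy).
      apply Rmult_integral in Z2. destruct Z2 as [Z2|Z2]; [lra|]. unfold p. lra. }
    assert (Hw' : forall y, a <= y <= b -> w y <> s /\ w y <> -s).
    { intros z Hz; split; intro E; pose proof (Hpw z Hz) as P; rewrite E in P;
        [rewrite (p_s lam s hl) in P | rewrite (p_ms lam s hl) in P];
        specialize (HFN z Hz); rewrite <- P in HFN;
        [rewrite Rabs_Ropp in HFN|]; rewrite Rabs_right in HFN; lra. }
    assert (Hcw : forall z, continuity_pt (fun z => w (clamp a b z)) z) by (intro; ccont).
    assert (Hwm : forall y, a <= y <= b -> -s < w y < s).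
    { intros y Hy. destruct (Hw' y Hy) as [n1 n2].
      destruct (Req_dec y a) as [->|Ha]. { rewrite Hwa. lra. }
      split; apply Rnot_le_lt; intro C.
      - destruct (IVT (fun z => - s - w (clamp a b z)) a y ltac:(intro; ccont) ltac:(lra))
          as [z [Hz Hz0]].
        { cbv beta. rewrite clamp_id, Hwa by lra. lra. }
        { cbv beta. rewrite clamp_id by lra. lra. }
        cbv beta in Hz0. rewrite clamp_id in Hz0 by lra.
        apply (proj2 (Hw' z ltac:(lra))). lra.
      - destruct (IVT (fun z => w (clamp a b z) - s) a y ltac:(intro; ccont) ltac:(lra))
          as [z [Hz Hz0]].
        { cbv beta. rewrite clamp_id, Hwa by lra. lra. }
        { cbv beta. rewrite clamp_id by lra. lra. }
        cbv beta in Hz0. rewrite clamp_id in Hz0 by lra.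
        apply (proj1 (Hw' z ltac:(lra))). lra. }
    apply Huniq; auto.
  - intros x Hx. destruct (Hv x Hx) as [H1 H2]. split; [exact H1|split; [exact H2|]].
    intros z Hz Hz'. apply Huniq; auto.
Qed.
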